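(* Let $b\ge2$, $n\ge1$ be integers and $\mathcal D=\{d,\dots,d+b-1\}$ a set of consecutive integers containing $0$. For $i,j\in\Omega_n(b,\mathcal D)$, the transition probability $p_{i,j}=\Pr(C_{t+1}=j\mid C_t=i)$ of the $n$-carry process over $(b,\mathcal D)$ equals $$p_{i,j}=\frac{1}{b^n}\sum_{k=0}^{\,j-\left\lfloor \frac{d(n-1)+i}{b}\right\rfloor}(-1)^k\binom{n+1}{k}\binom{n+b(j+1-k)-d(n-1)-i-1}{n},$$ (an empty sum being $0$; all upper entries of the binomial coefficients in the range of summation are nonnegative integers, and $\binom{N}{n}=0$ for $0\le N<n$).
   Context: Carries process over $(b,\mathcal D)$: let $\{X_{k,i}\}_{1\le k\le n,\ i\ge 0}$ be independent random variables, each uniformly distributed on $\mathcal D$. Set $C_0=0$; for $i\ge 0$ let $A_i$ be the unique element of $\mathcal D$ with $A_i\equiv C_i+X_{1,i}+\dots+X_{n,i}\pmod b$, and set $C_{i+1}=(C_i+X_{1,i}+\dots+X_{n,i}-A_i)/b$. The state space $\Omega_n(b,\mathcal D)$ is the set of integers $c$ with $\Pr(C_i=c)>0$ for some $i\ge0$. *)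

(* Defs.v *)
From HB Require Import structures.
From mathcomp Require Import all_boot all_order all_algebra.
Set Implicit Arguments. Unset Strict Implicit. Unset Printing Implicit Defensive.
Import Order.TTheory GRing.Theory Num.Theory.
Local Open Scope ring_scope.

(* Digit set D = {d, ..., d+b-1}; a uniform digit of D is encoded as
   d + k with k uniform in 'I_b (a bijection 'I_b -> D). *)

(* One step of the carries process: given the carry c and the digit sum
   s = X_{1,i}+...+X_{n,i}, A is the unique element of D congruent to c+s
   mod b, namely d + ((c+s-d) mod b), and the new carry is (c+s-A)/b. *)
Definition carry_step (b : nat) (d : int) (c s : int) : int :=
  let A := d + ((c + s - d) %% (b%:Z))%Z in
  ((c + s - A) %/ (b%:Z))%Z.

(* Sample space for the first T rounds: all digit arrays
   omega : 'I_T -> 'I_n -> 'I_b (uniform, hence independent uniform digits).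
   digitX omega i k = X_{k,i} as an element of D (for i < T). *)
Definition digitX (b n T : nat) (d : int)
    (omega : {ffun 'I_T -> {ffun 'I_n -> 'I_b}}) (i : nat) (k : 'I_n) : int :=
  match (insub i : option 'I_T) with
  | Some i' => d + ((omega i' k : nat)%:Z)
  | None => 0
  end.

Fixpoint carry_at (b n T : nat) (d : int)
    (omega : {ffun 'I_T -> {ffun 'I_n -> 'I_b}}) (t : nat) : int :=
  match t with
  | 0 => 0
  | t'.+1 => carry_step b d (carry_at d omega t') (\sum_(k < n) digitX d omega t' k)
  end.

Definition prob_C (b n : nat) (d : int) (t : nat) (c : int) : rat :=
  (#|[pred omega : {ffun 'I_t -> {ffun 'I_n -> 'I_b}} | carry_at d omega t == c]|)%:R
  / ((b ^ (n * t))%N)%:R.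

Definition in_Omega (b n : nat) (d : int) (c : int) : Prop :=
  exists t : nat, 0 < prob_C b n d t c.

Definition trans_prob (b n : nat) (d : int) (t : nat) (i j : int) : rat :=
  (#|[pred omega : {ffun 'I_t.+1 -> {ffun 'I_n -> 'I_b}} |
        (carry_at d omega t == i) && (carry_at d omega t.+1 == j)]|)%:R
  / (#|[pred omega : {ffun 'I_t.+1 -> {ffun 'I_n -> 'I_b}} |
        carry_at d omega t == i]|)%:R.

Definition binz (N : int) (m : nat) : nat :=
  if (0 <= N) then 'C(`|N|%N, m) else 0%N.

Definition trans_formula (b n : nat) (d : int) (i j : int) : rat :=
  let M : int := j - ((d * (n%:Z - 1) + i) %/ (b%:Z))%Z in
  (((b ^ n)%N)%:R)^-1 *
  (if 0 <= M then
     \sum_(0 <= k < (`|M|%N).+1)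
        ((-1) ^+ k * ('C(n.+1, k))%:R
         * (binz (n%:Z + (b%:Z) * (j + 1 - k%:Z) - d * (n%:Z - 1) - i - 1) n)%:R)
   else 0).

(* Main.v *)
Require Import Defs.
From HB Require Import structures.
From mathcomp Require Import all_boot all_order all_algebra.
From mathcomp Require Import zify ring lra.
Set Implicit Arguments. Unset Strict Implicit. Unset Printing Implicit Defensive.
Import Order.TTheory GRing.Theory Num.Theory.
Local Open Scope ring_scope.

Lemma binz_pascal (N : int) (m : nat) :
  binz (N + 1) m.+1 = (binz N m.+1 + binz N m)%N.
Proof.
rewrite /binz.
case: (ltrP N (-1)) => h.
  have h1 : ~~ (0 <= N + 1) by rewrite -ltNge; lia.
  have h2 : ~~ (0 <= N) by rewrite -ltNge; lia.
  by rewrite (negbTE h1) (negbTE h2).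
case: (ltrP N 0) => h'.
  have -> : N = -1 by lia.
  by rewrite /= bin0n.
have h1 : 0 <= N + 1 by lia.
have h2 : (0 <= N) = true by apply/idP; lia.
rewrite h1 ?h2.
have -> : absz (N + 1) = (absz N).+1 by lia.
by rewrite binS addnC.
Qed.

Lemma binz_neg (N : int) (m : nat) : N < m%:Z -> binz N m = 0%N.
Proof.
rewrite /binz => h; case: ifP => // h0.
apply: bin_small; lia.
Qed.

Lemma binz_tele (N : int) (m c : nat) :
  (\sum_(0 <= u < c) (binz (N - u%:Z) m)%:Z) =
  (binz (N + 1) m.+1)%:Z - (binz (N + 1 - c%:Z) m.+1)%:Z.
Proof.
elim: c => [|c IH]; first by rewrite big_nil subr0 subrr.
rewrite big_nat_recr //= IH.
have := binz_pascal (N - c%:Z) m.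
have -> : N - c%:Z + 1 = N + 1 - c%:Z by ring.
have -> : N + 1 - (c.+1)%:Z = N - c%:Z by lia.
move=> ->; rewrite PoszD; ring.
Qed.

Lemma Cz_small n k : (n < k)%N -> ('C(n, k))%:Z = 0 :> int.
Proof. by move=> h; rewrite bin_small. Qed.

Definition Bsgn (k : nat) : int := (-1) ^+ k.

Lemma pascal_sum (n : nat) (H : nat -> int) :
  \sum_(0 <= k < n.+1) Bsgn k * ('C(n, k))%:Z * H k
  - \sum_(0 <= k < n.+1) Bsgn k * ('C(n, k))%:Z * H k.+1
  = \sum_(0 <= k < n.+2) Bsgn k * ('C(n.+1, k))%:Z * H k.
Proof.
rewrite [in RHS]big_nat_recl //.
have -> : \sum_(0 <= i < n.+1) Bsgn i.+1 * ('C(n.+1, i.+1))%:Z * H i.+1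
  = \sum_(0 <= i < n.+1) Bsgn i.+1 * ('C(n, i.+1))%:Z * H i.+1
  - \sum_(0 <= i < n.+1) Bsgn i * ('C(n, i))%:Z * H i.+1.
  rewrite -sumrB; apply: eq_bigr => k _.
  rewrite binS PoszD /Bsgn exprS; ring.
rewrite [\sum_(0 <= i < n.+1) Bsgn i.+1 * _ * _]big_nat_recr //= (Cz_small (ltnSn n)) mulr0 mul0r addr0.
rewrite [in LHS]big_nat_recl // !bin0 /Bsgn /=; ring.
Qed.

Definition Ff (b n : nat) (m : int) : int :=
  \sum_(0 <= k < n.+1) Bsgn k * ('C(n, k))%:Z * (binz (m - k%:Z * b%:Z + n%:Z) n)%:Z.

Lemma Ff_rec (b n : nat) (m : int) :
  \sum_(0 <= u < b) Ff b n (m - u%:Z) = Ff b n.+1 m.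
Proof.
rewrite /Ff exchange_big /=.
pose H k := (binz (m - k%:Z * b%:Z + (n.+1)%:Z) n.+1)%:Z.
rewrite -(pascal_sum n H).
rewrite -sumrB; apply: eq_bigr => k _.
rewrite -mulr_sumr -mulrBr; congr (_ * _).
rewrite (eq_bigr (fun u => (binz ((m - k%:Z * b%:Z + n%:Z) - u%:Z) n)%:Z)); last first.
  by move=> u _; congr (Posz (binz _ _)); ring.
rewrite binz_tele /H; congr (Posz (binz _ _) - Posz (binz _ _)); lia.
Qed.

Definition Lc (b n : nat) (m : int) : int :=
  \sum_(x : {ffun 'I_n -> 'I_b}) (if (\sum_k ((x k : nat)%:Z)) <= m then 1 else 0).

Definition extf (T : Type) (t : nat) (f : {ffun 'I_t -> T}) (x : T) : {ffun 'I_t.+1 -> T} :=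
  [ffun i => match unlift ord_max i with Some i' => f i' | None => x end].

Definition restrf (T : Type) (t : nat) (w : {ffun 'I_t.+1 -> T}) : {ffun 'I_t -> T} * T :=
  ([ffun i => w (lift ord_max i)], w ord_max).

Lemma extf_lift (T : Type) t (f : {ffun 'I_t -> T}) x i : extf f x (lift ord_max i) = f i.
Proof. by rewrite ffunE liftK. Qed.

Lemma extf_max (T : Type) t (f : {ffun 'I_t -> T}) x : extf f x ord_max = x.
Proof. by rewrite ffunE unlift_none. Qed.

Lemma sum_ffunS (R : Type) (idx : R) (op : Monoid.com_law idx) (T : finType) (t : nat)
  (F : {ffun 'I_t.+1 -> T} -> R) :
  \big[op/idx]_(w : {ffun 'I_t.+1 -> T}) F w =
  \big[op/idx]_(f : {ffun 'I_t -> T}) \big[op/idx]_(x : T) F (extf f x).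
Proof.
rewrite pair_big /=.
rewrite (reindex (fun p : {ffun 'I_t -> T} * T => extf p.1 p.2)) /=.
  by apply: eq_bigl.
apply: onW_bij; exists (@restrf T t).
  case=> f x; rewrite /restrf extf_max; congr pair.
  by apply/ffunP => i; rewrite ffunE extf_lift.
move=> w; apply/ffunP => i; rewrite ffunE /restrf /=.
by case: unliftP => [j ->|->]; rewrite ?ffunE.
Qed.

Lemma Lc0 (b : nat) (m : int) : Lc b 0 m = if 0 <= m then 1 else 0.
Proof.
rewrite /Lc (eq_bigr (fun _ => if 0 <= m then 1 else 0)); last first.
  by move=> x _; rewrite big_ord0.
rewrite sumr_const card_ffun !card_ord expn0 mulr1n.
by [].
Qed.

Lemma Lc_rec (b n : nat) (m : int) :
  Lc b n.+1 m = \sum_(0 <= u < b) Lc b n (m - u%:Z).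
Proof.
rewrite /Lc sum_ffunS exchange_big /= big_mkord.
apply: eq_bigr => u _; apply: eq_bigr => f _.
rewrite big_ord_recr /= extf_max.
rewrite (eq_bigr (fun k => ((f k : nat)%:Z))); last first.
  move=> k _; rewrite (_ : widen_ord _ k = lift ord_max k) ?extf_lift //.
  by apply: val_inj; rewrite /= /bump leqNgt ltn_ord.
by rewrite lerBrDr.
Qed.

Lemma Lc_Ff (b n : nat) (m : int) : Lc b n m = Ff b n m.
Proof.
elim: n m => [|n IH] m.
  rewrite Lc0 /Ff big_nat1 /Bsgn expr0 bin0 mul1r /binz.
  rewrite (_ : m - 0%:Z * b%:Z + 0%:Z = m); last by ring.
  by case: ifP => h; rewrite ?bin0.
rewrite Lc_rec -Ff_rec; apply: eq_bigr => u _; exact: IH.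
Qed.

Lemma carry_step_eq (b : nat) (d c s : int) : (0 < b)%N ->
  carry_step b d c s = ((c + s - d) %/ b%:Z)%Z.
Proof.
move=> hb; rewrite /carry_step.
set m := c + s - d.
have -> : c + s - (d + (m %% b%:Z)%Z) = m - (m %% b%:Z)%Z by rewrite /m; ring.
have e := divz_eq m b%:Z.
have -> : m - (m %% b%:Z)%Z = (m %/ b%:Z)%Z * b%:Z by rewrite {1}e; ring.
rewrite mulzK //; lia.
Qed.

Lemma digitX_lt (b n T : nat) (d : int) (w : {ffun 'I_T -> {ffun 'I_n -> 'I_b}})
  (i : nat) (h : (i < T)%N) k :
  digitX d w i k = d + ((w (Ordinal h) k : nat)%:Z).
Proof.
rewrite /digitX (@insubT _ (fun j => (j < T)%N) _ i h) /=.
by [].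
Qed.

Lemma digitX_ext (b n t : nat) (d : int) (f : {ffun 'I_t -> {ffun 'I_n -> 'I_b}}) x
  (i : nat) (h : (i < t)%N) k :
  digitX d (extf f x) i k = digitX d f i k.
Proof.
have h1 : (i < t.+1)%N by apply: ltnW.
rewrite (digitX_lt _ _ h1) (digitX_lt _ _ h).
have -> : Ordinal h1 = lift ord_max (Ordinal h).
  by apply: val_inj; rewrite /= /bump leqNgt h.
by rewrite extf_lift.
Qed.

Lemma digitX_max (b n t : nat) (d : int) (f : {ffun 'I_t -> {ffun 'I_n -> 'I_b}}) x k :
  digitX d (extf f x) t k = d + ((x k : nat)%:Z).
Proof.
rewrite (digitX_lt _ _ (ltnSn t)).
have -> : Ordinal (ltnSn t) = ord_max by apply: val_inj.
by rewrite extf_max.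
Qed.

Lemma carry_ext (b n t : nat) (d : int) (f : {ffun 'I_t -> {ffun 'I_n -> 'I_b}}) x s :
  (s <= t)%N -> carry_at d (extf f x) s = carry_at d f s.
Proof.
elim: s => [|s IH] hs //=.
rewrite IH; last by apply: ltnW.
congr carry_step; apply: eq_bigr => k _; exact: digitX_ext.
Qed.

Lemma card_sum (T : finType) (P : pred T) :
  #|[pred x | P x]| = \sum_(x : T) (P x : nat).
Proof.
rewrite -sum1_card big_mkcond /=; apply: eq_bigr => x _.
by rewrite /= unfold_in; case: (P x).
Qed.

Lemma carry_S (b n T : nat) (d : int) (w : {ffun 'I_T -> {ffun 'I_n -> 'I_b}}) s :
  carry_at d w s.+1 = carry_step b d (carry_at d w s) (\sum_(k < n) digitX d w s k).
Proof. by []. Qed.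

Lemma trans_prob_eq (b n t : nat) (d i j : int) (hb : (0 < b)%N)
  (hA : #|[pred f : {ffun 'I_t -> {ffun 'I_n -> 'I_b}} | carry_at d f t == i]| != 0%N) :
  trans_prob b n d t i j =
  (\sum_(x : {ffun 'I_n -> 'I_b})
      (carry_step b d i (\sum_(k < n) (d + ((x k : nat)%:Z))) == j : nat))%:R
  / ((b ^ n)%N)%:R.
Proof.
move: hA; rewrite /trans_prob !card_sum !sum_ffunS.
set A := \sum_(f : {ffun 'I_t -> {ffun 'I_n -> 'I_b}}) (carry_at d f t == i : nat).
set Bn := \sum_(x : {ffun 'I_n -> 'I_b}) _.
move=> hA.
have -> : \sum_(f : {ffun 'I_t -> {ffun 'I_n -> 'I_b}}) \sum_(x : {ffun 'I_n -> 'I_b})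
    (((carry_at d (extf f x) t == i) && (carry_at d (extf f x) t.+1 == j)) : nat)
    = (A * Bn)%N.
  rewrite /A big_distrl /=; apply: eq_bigr => f _.
  have ce : forall x, carry_at d (extf f x) t = carry_at d f t by move=> x; rewrite carry_ext.
  under eq_bigr => x _ do rewrite ce.
  case: eqP => [e|_] /=; last by rewrite mul0n big1.
  rewrite mul1n /Bn; apply: eq_bigr => x _.
  rewrite e; congr (nat_of_bool (carry_step _ _ _ _ == _)).
  by apply: eq_bigr => k _; rewrite digitX_max.
have -> : \sum_(f : {ffun 'I_t -> {ffun 'I_n -> 'I_b}}) \sum_(x : {ffun 'I_n -> 'I_b})
    ((carry_at d (extf f x) t == i) : nat) = (A * b ^ n)%N.
  rewrite /A big_distrl /=; apply: eq_bigr => f _.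
  rewrite (eq_bigr (fun _ => (carry_at d f t == i : nat))); last by move=> x _; rewrite carry_ext.
  by rewrite sum_nat_const card_ffun !card_ord mulnC.
have hA' : (A%:R : rat) != 0 by rewrite pnatr_eq0.
rewrite !natrM; field.
by rewrite hA' andbT pnatr_eq0 -lt0n expn_gt0 hb.
Qed.

Lemma indic_div (b : nat) (a y j : int) : (0 < b)%N ->
  (((a + y) %/ b%:Z)%Z == j : nat)%:R =
  (if y <= b%:Z * j + b%:Z - 1 - a then 1 else 0) - (if y <= b%:Z * j - 1 - a then 1 else 0) :> int.
Proof.
move=> hb.
have bp : 0 < b%:Z by lia.
set q := ((a + y) %/ b%:Z)%Z.
have h1 : q * b%:Z <= a + y by apply: lez_floor; lia.
have h2 : a + y < (q + 1) * b%:Z by apply: ltz_ceil.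
case: (ltgtP q j) => hq.
- have : (q + 1) * b%:Z <= j * b%:Z by apply: ler_wpM2r; lia.
  move=> h3; rewrite ifT; last by lia.
  rewrite ifT; last by lia.
  by rewrite subrr.
- have : (j + 1) * b%:Z <= q * b%:Z by apply: ler_wpM2r; lia.
  move=> h3; rewrite ifF; last by apply/negbTE; rewrite -ltNge; lia.
  rewrite ifF; last by apply/negbTE; rewrite -ltNge; lia.
  by rewrite subrr.
- rewrite ifT; last by lia.
  rewrite ifF; last by apply/negbTE; rewrite -ltNge; lia.
  by rewrite subr0.
Qed.

Definition Tz (b n : nat) (d i j : int) (k : nat) : int :=
  Bsgn k * ('C(n.+1, k))%:Z *
  (binz (n%:Z + b%:Z * (j + 1 - k%:Z) - d * (n%:Z - 1) - i - 1) n)%:Z.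

Lemma Bn_eq (b n : nat) (d i j : int) (hb : (0 < b)%N) :
  ((\sum_(x : {ffun 'I_n -> 'I_b})
      (carry_step b d i (\sum_(k < n) (d + ((x k : nat)%:Z))) == j : nat))%:R : int)
  = \sum_(0 <= k < n.+2) Tz b n d i j k.
Proof.
set a := d * (n%:Z - 1) + i.
rewrite natr_sum.
rewrite (eq_bigr (fun x : {ffun 'I_n -> 'I_b} =>
   (if (\sum_k ((x k : nat)%:Z)) <= b%:Z * j + b%:Z - 1 - a then 1 else 0)
   - (if (\sum_k ((x k : nat)%:Z)) <= b%:Z * j - 1 - a then 1 else 0))); last first.
  move=> x _; rewrite -indic_div // carry_step_eq //.
  rewrite big_split /= sumr_const card_ord.
  set S := \sum_(k < n) _.
  have -> : i + (d *+ n + S) - d = a + S by rewrite /a -[d *+ n]mulr_natr natz; ring.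
  by [].
rewrite sumrB -/(Lc b n _) -/(Lc b n _) !Lc_Ff /Ff.
pose H k := (binz (b%:Z * j + b%:Z - 1 - a - k%:Z * b%:Z + n%:Z) n)%:Z.
have -> : \sum_(0 <= k < n.+1) Bsgn k * ('C(n, k))%:Z *
      (binz (b%:Z * j - 1 - a - k%:Z * b%:Z + n%:Z) n)%:Z
    = \sum_(0 <= k < n.+1) Bsgn k * ('C(n, k))%:Z * H k.+1.
  by apply: eq_bigr => k _; rewrite /H; congr (_ * Posz (binz _ _)); lia.
rewrite (pascal_sum n H); apply: eq_bigr => k _.
rewrite /Tz /H; congr (_ * Posz (binz _ _)); rewrite /a; ring.
Qed.

Lemma sum_trunc (T : nat -> int) (K1 K2 : nat) :
  (forall k, (K1 <= k)%N -> T k = 0) -> (forall k, (K2 <= k)%N -> T k = 0) ->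
  \sum_(0 <= k < K1) T k = \sum_(0 <= k < K2) T k.
Proof.
wlog le12 : K1 K2 / (K1 <= K2)%N.
  move=> W h1 h2; case: (leqP K1 K2) => h; first exact: W.
  by symmetry; apply: W => //; apply: ltnW.
move=> h1 _; rewrite (big_cat_nat (leq0n K1) le12) /=.
rewrite [X in _ = _ + X]big_nat_cond.
rewrite [X in _ = _ + X]big1 ?addr0 //.
by move=> k /andP [/andP [hk _] _]; apply: h1.
Qed.

Lemma Tz_zero1 b n d i j k : (n.+1 < k)%N -> Tz b n d i j k = 0.
Proof. by move=> h; rewrite /Tz Cz_small // mulr0 mul0r. Qed.

Lemma Tz_zero2 b n d i j k : (0 < b)%N ->
  j + 1 - k%:Z <= ((d * (n%:Z - 1) + i) %/ b%:Z)%Z -> Tz b n d i j k = 0.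
Proof.
move=> hb h; rewrite /Tz binz_neg ?mulr0 //.
set a := d * (n%:Z - 1) + i in h *.
have h1 : ((a %/ b%:Z)%Z * b%:Z <= a) by apply: lez_floor; lia.
have h2 : b%:Z * (j + 1 - k%:Z) <= b%:Z * (a %/ b%:Z)%Z by apply: ler_wpM2l; lia.
rewrite /a in h1 h2 *; lia.
Qed.

Theorem theorem2 (b n : nat) (d : int)
  (hb : (2 <= b)%N) (hn : (1 <= n)%N)
  (hd0 : d <= 0) (hd1 : 0 <= d + (b%:Z) - 1)
  (i j : int) (hi : in_Omega b n d i) (hj : in_Omega b n d j)
  (t : nat) (ht : 0 < prob_C b n d t i) :
  trans_prob b n d t i j = trans_formula b n d i j.
Proof.
have hb0 : (0 < b)%N by apply: leq_trans hb.
rewrite trans_prob_eq //; last first.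
  move: ht; rewrite /prob_C; apply: contraTneq => ->.
  by rewrite mul0r ltxx.
have -> : forall N : nat, (N%:R : rat) = ((N%:R : int))%:~R by move=> N; rewrite natz.
rewrite Bn_eq // /trans_formula.
cbv zeta.
set a := d * (n%:Z - 1) + i.
case: (lerP 0 (j - (a %/ b%:Z)%Z)) => hM.
  rewrite mulrC; congr (_ * _).
  rewrite (@sum_trunc _ n.+2 (`|j - (a %/ b%:Z)%Z|%N).+1); last first.
  - move=> k hk; apply: Tz_zero2 => //; rewrite -/a; lia.
  - by move=> k hk; apply: Tz_zero1.
  rewrite rmorph_sum; apply: eq_bigr => k _.
  by rewrite /Tz !rmorphM /= intr_sign.
rewrite big1_seq; first by rewrite mulr0 mul0r.
move=> k _; apply: Tz_zero2 => //; rewrite -/a; lia.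
Qed.
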